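(* Let $G$ be a bus graph containing an $(A,B)$-perp with vertices $x,y,z,A,A',B,B',C$ as defined below, and let $\Gamma$ be any realization of $G$. Then (1) $\Gamma(B)$ and $\Gamma(B')$ are parallel; (2) $\Gamma(A)$ and $\Gamma(B)$ are perpendicular; (3) $\Gamma(A)$ and $\Gamma(A')$ are parallel.
   Context: A bus graph is a finite bipartite graph $G=(\mathcal{B},\mathcal{C};\mathcal{E})$ with $\deg(c)\le 4$ for all $c\in\mathcal{C}$. A realization $\Gamma$ of $G$ in the integer grid is a drawing such that: (1) each $B\in\mathcal{B}$ is drawn as a closed line segment $\Gamma(B)$ along a grid line (a ''bus''); (2) each $c\in\mathcal{C}$ is drawn as a grid point $\Gamma(c)$; (3) each edge $(B,c)\in\mathcal{E}$ is drawn as a closed line segment along a grid line between a point of $\Gamma(B)$ and $\Gamma(c)$, perpendicular to $\Gamma(B)$, containing no connectors or buses other than $\Gamma(B)$ and $\Gamma(c)$ (edges may cross other edges); (4) no two buses or connectors intersect. An $(A,B)$-perp is a bus graph component consisting of three distinct $\mathcal{C}$-vertices $x,y,z$, five distinct $\mathcal{B}$-vertices $A,A',B,B',C$, and the twelve edges $(A,x),(A',x),(B,x),(B',x)$, $(A,y),(A',y),(B,y),(C,y)$, $(A,z),(A',z),(B',z),(C,z)$. *)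

(* Defs.v *)
From mathcomp Require Import all_boot all_order all_algebra.
Set Implicit Arguments. Unset Strict Implicit. Unset Printing Implicit Defensive.
Import Order.TTheory GRing.Theory Num.Theory.
Local Open Scope ring_scope.

Definition bus_graph (Bv Cv : finType) (E : Bv -> Cv -> bool) : Prop :=
  forall c : Cv, (#|[pred b | E b c]| <= 4)%N.

Definition point := (int * int)%type.

(* A bus drawing: a closed segment along a grid line.  [horiz] = true means
   the segment lies on the horizontal line y = fixc, with x in [lo, hi];
   otherwise it lies on the vertical line x = fixc with y in [lo, hi]. *)
Record bus_draw := BusDraw { horiz : bool; fixc : int; lo : int; hi : int }.

Definition bus_valid (s : bus_draw) : bool := lo s <= hi s.

Definition on_bus (s : bus_draw) (p : point) : bool :=
  if horiz s then (p.2 == fixc s) && (lo s <= p.1 <= hi s)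
  else (p.1 == fixc s) && (lo s <= p.2 <= hi s).

(* The edge from bus s to connector point q: the segment perpendicular to s
   joining the foot point of q on the line of s to q. *)
Definition foot_in_bus (s : bus_draw) (q : point) : bool :=
  if horiz s then lo s <= q.1 <= hi s else lo s <= q.2 <= hi s.

Definition between (a b t : int) : bool := (Num.min a b <= t <= Num.max a b).

Definition on_edge (s : bus_draw) (q : point) (p : point) : bool :=
  if horiz s then (p.1 == q.1) && between (fixc s) q.2 p.2
  else (p.2 == q.2) && between (fixc s) q.1 p.1.

Definition realization (Bv Cv : finType) (E : Bv -> Cv -> bool)
  (GB : Bv -> bus_draw) (GC : Cv -> point) : Prop :=
  (forall b, bus_valid (GB b)) /\
  injective GC /\
  (forall b b', b != b' -> forall p, ~ (on_bus (GB b) p /\ on_bus (GB b') p)) /\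
  (forall b c, ~~ on_bus (GB b) (GC c)) /\
  (forall b c, E b c ->
     [/\ foot_in_bus (GB b) (GC c),
         (forall c', c' != c -> ~~ on_edge (GB b) (GC c) (GC c')) &
         (forall b', b' != b -> forall p,
             ~ (on_edge (GB b) (GC c) p /\ on_bus (GB b') p))]).

Definition perp_edges (Bv Cv : finType) (x y z : Cv) (A A' B B' C : Bv)
  : seq (Bv * Cv) :=
  [:: (A, x); (A', x); (B, x); (B', x);
      (A, y); (A', y); (B, y); (C, y);
      (A, z); (A', z); (B', z); (C, z)].

Definition is_perp (Bv Cv : finType) (E : Bv -> Cv -> bool)
  (x y z : Cv) (A A' B B' C : Bv) : Prop :=
  uniq [:: x; y; z] /\ uniq [:: A; A'; B; B'; C] /\
  (* the component: every edge incident to one of these vertices is one of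
     the twelve listed edges, and all twelve are edges *)
  (forall b c, (b \in [:: A; A'; B; B'; C]) || (c \in [:: x; y; z]) ->
     (E b c <-> (b, c) \in perp_edges x y z A A' B B' C)).

(* Main.v *)
Require Import Defs.
From mathcomp Require Import all_boot all_order all_algebra zify.
Import Order.TTheory GRing.Theory Num.Theory.
Local Open Scope ring_scope.
Set Implicit Arguments. Unset Strict Implicit.
Lemma int3 (f1 f2 f3 q : int) :
  [|| between f1 q f2, between f2 q f1, between f1 q f3, between f3 q f1,
      between f2 q f3 | between f3 q f2].
Proof.
rewrite /between.
case: (leP f1 q); case: (leP f2 q); case: (leP f3 q); case: (leP f1 f2); case: (leP f2 f3); case: (leP f1 f3); rewrite /Num.min /Num.max /=; lia.
Qed.

Definition coord (h : bool) (q : point) := if h then q.2 else q.1.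

Lemma two_side (Bv Cv : finType) (E : Bv -> Cv -> bool)
  (GB : Bv -> bus_draw) (GC : Cv -> point) c b1 b2 :
  realization E GB GC -> E b1 c -> E b2 c -> b1 != b2 ->
  horiz (GB b1) = horiz (GB b2) ->
  ~~ between (fixc (GB b1)) (coord (horiz (GB b1)) (GC c)) (fixc (GB b2)).
Proof.
move=> [_ [_ [_ [_ He]]]] E1 E2 n12 hh; apply/negP => Hb.
have [_ _ H1] := He _ _ E1.
have [F2 _ _] := He _ _ E2.
have n21 : b2 != b1 by rewrite eq_sym.
move: Hb F2; rewrite /coord /foot_in_bus -hh.
case hb: (horiz (GB b1)) => Hb F2.
- apply: (H1 b2 n21 ((GC c).1, fixc (GB b2))).
  by rewrite /on_edge /on_bus hb -hh hb /=; split; rewrite eqxx ?Hb...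
- apply: (H1 b2 n21 (fixc (GB b2), (GC c).2)).
  by rewrite /on_edge /on_bus hb -hh hb /=; split; rewrite eqxx ?Hb...
Qed.

Lemma notrip (Bv Cv : finType) (E : Bv -> Cv -> bool)
  (GB : Bv -> bus_draw) (GC : Cv -> point) c b1 b2 b3 :
  realization E GB GC -> E b1 c -> E b2 c -> E b3 c ->
  b1 != b2 -> b1 != b3 -> b2 != b3 ->
  ~~ ((horiz (GB b1) == horiz (GB b2)) && (horiz (GB b2) == horiz (GB b3))).
Proof.
move=> R E1 E2 E3 n12 n13 n23; apply/negP => /andP [/eqP h12 /eqP h23].
have n21 : b2 != b1 by rewrite eq_sym.
have n31 : b3 != b1 by rewrite eq_sym.
have n32 : b3 != b2 by rewrite eq_sym.
have := int3 (fixc (GB b1)) (fixc (GB b2)) (fixc (GB b3)) (coord (horiz (GB b1)) (GC c)).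
case/or4P => [H|H|H|/or3P [H|H|H]].
- by move: (two_side R E1 E2 n12 h12); rewrite H.
- by move: (two_side R E2 E1 n21 (esym h12)); rewrite -h12 H.
- by move: (two_side R E1 E3 n13 (etrans h12 h23)); rewrite H.
- by move: (two_side R E3 E1 n31 (esym (etrans h12 h23))); rewrite -h23 -h12 H.
- by move: (two_side R E2 E3 n23 h23); rewrite -h12 H.
- by move: (two_side R E3 E2 n32 (esym h23)); rewrite -h23 -h12 H.
Qed.

Theorem lemma3 (Bv Cv : finType) (E : Bv -> Cv -> bool)
  (x y z : Cv) (A A' B B' C : Bv)
  (GB : Bv -> bus_draw) (GC : Cv -> point) :
  bus_graph E ->
  is_perp E x y z A A' B B' C ->
  realization E GB GC ->
  [/\ horiz (GB B) = horiz (GB B'),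
      horiz (GB A) <> horiz (GB B) &
      horiz (GB A) = horiz (GB A')].
Proof.
move=> _ [_ [U HE]] R.
have e : forall b c, (b \in [:: A; A'; B; B'; C]) || (c \in [:: x; y; z]) ->
    (b, c) \in perp_edges x y z A A' B B' C -> E b c.
  by move=> b c Hb Hm; apply/(HE b c Hb).
have Ax : E A x by apply: e; rewrite /perp_edges !inE !eqxx ?orbT.
have A'x : E A' x by apply: e; rewrite /perp_edges !inE !eqxx ?orbT.
have Bx : E B x by apply: e; rewrite /perp_edges !inE !eqxx ?orbT.
have B'x : E B' x by apply: e; rewrite /perp_edges !inE !eqxx ?orbT.
have Ay : E A y by apply: e; rewrite /perp_edges !inE !eqxx ?orbT.
have A'y : E A' y by apply: e; rewrite /perp_edges !inE !eqxx ?orbT.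
have By : E B y by apply: e; rewrite /perp_edges !inE !eqxx ?orbT.
have Cy : E C y by apply: e; rewrite /perp_edges !inE !eqxx ?orbT.
have Az : E A z by apply: e; rewrite /perp_edges !inE !eqxx ?orbT.
have A'z : E A' z by apply: e; rewrite /perp_edges !inE !eqxx ?orbT.
have B'z : E B' z by apply: e; rewrite /perp_edges !inE !eqxx ?orbT.
have Cz : E C z by apply: e; rewrite /perp_edges !inE !eqxx ?orbT.
move: U; rewrite /= !inE !negb_or => /and5P [/and4P [n1 n2 n3 n4] /and3P [n5 n6 n7] /andP [n8 n10] n9 _].
have t1 := notrip R Ax A'x Bx n1 n2 n5.
have t2 := notrip R Ax A'x B'x n1 n3 n6.
have t3 := notrip R Ax Bx B'x n2 n3 n8.
have t4 := notrip R A'x Bx B'x n5 n6 n8.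
have t5 := notrip R Ay A'y Cy n1 n4 n7.
have t6 := notrip R Ay By Cy n2 n4 n10.
have t7 := notrip R A'y By Cy n5 n7 n10.
have t8 := notrip R Az A'z Cz n1 n4 n7.
have t9 := notrip R Az B'z Cz n3 n4 n9.
have t10 := notrip R A'z B'z Cz n6 n7 n9.
have t11 := notrip R Az A'z B'z n1 n3 n6.
move: t1 t2 t3 t4 t5 t6 t7 t8 t9 t10 t11.
case: (horiz (GB A)); case: (horiz (GB A')); case: (horiz (GB B)); case: (horiz (GB B')); case: (horiz (GB C)) => //.
Qed.
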